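(* Let $T$ be a bounded operator on $C([0,\omega_1])$ such that $T\neq\widetilde{P}_\sigma T\widetilde{P}_\sigma$ for every countable ordinal $\sigma$. Then there is $\epsilon>0$ such that for each countable ordinal $\xi$ there exists $f\in C([0,\omega_1])$ with $\operatorname{supp}(f)\subseteq(\xi,\omega_1)$, $\|f\|\le1$ and $\|Tf\|\ge\epsilon$.
   Context: $\omega_1$ is the first uncountable ordinal; $[0,\omega_1]$ has the order topology and $C([0,\omega_1])$ is the Banach space of continuous scalar-valued functions with sup norm. $\operatorname{supp}(f)=\{k: f(k)\neq0\}$. For a countable ordinal $\sigma$, $\widetilde{P}_\sigma f=f\cdot\mathbf{1}_{[0,\sigma]}+f(\omega_1)\mathbf{1}_{[\sigma+1,\omega_1]}$. *)

(* Defs.v *)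
From Stdlib Require Import Reals.
From Coquelicot Require Import Coquelicot.
Open Scope R_scope.

(* W (with strict order lt) models the set of countable ordinals [0, omega_1):
   a strict well-order that is uncountable and all of whose proper initial
   segments are countable.  Any such (W, lt) is order-isomorphic to omega_1. *)
Record is_omega1 (W : Type) (lt : W -> W -> bool) : Prop := {
  om_irrefl : forall x, lt x x = false;
  om_trans  : forall x y z, lt x y = true -> lt y z = true -> lt x z = true;
  om_total  : forall x y, lt x y = true \/ x = y \/ lt y x = true;
  om_wf     : well_founded (fun x y => lt x y = true);
  om_uncountable : ~ (exists g : W -> nat, forall x y, g x = g y -> x = y);
  om_segments_countable : forall x, exists g : W -> nat,
      forall y z, lt y x = true -> lt z x = true -> g y = g z -> y = z
}.

(* The compact space [0, omega_1]: Some a = countable ordinal a, None = omega_1. *)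
Definition pt (W : Type) := option W.

Definition ltp {W : Type} (lt : W -> W -> bool) (p q : pt W) : bool :=
  match p, q with
  | Some a, Some b => lt a b
  | Some _, None => true
  | None, _ => false
  end.

Definition lep {W : Type} (lt : W -> W -> bool) (p q : pt W) : bool :=
  match p, q with
  | Some a, Some b => orb (lt a b) (match lt b a with true => false | false => true end)
  | _, None => true
  | None, Some _ => false
  end.

(* Basic open sets of the order topology: intervals (lo, hi), where a missing
   endpoint (None) means unbounded on that side. *)
Definition in_interval {W : Type} (lt : W -> W -> bool)
  (lo hi : option (pt W)) (q : pt W) : Prop :=
  (match lo with None => True | Some a => ltp lt a q = true end) /\
  (match hi with None => True | Some b => ltp lt q b = true end).

Definition continuous_at_pt {W : Type} (lt : W -> W -> bool) (f : pt W -> R) (p : pt W) : Prop :=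
  forall eps, 0 < eps -> exists lo hi, in_interval lt lo hi p /\
    forall q, in_interval lt lo hi q -> Rabs (f q - f p) < eps.

Definition is_cont {W : Type} (lt : W -> W -> bool) (f : pt W -> R) : Prop :=
  forall p, continuous_at_pt lt f p.

Definition sup_norm {W : Type} (f : pt W -> R) : R :=
  real (Lub_Rbar (fun r => exists k, r = Rabs (f k))).

Definition bounded_operator {W : Type} (lt : W -> W -> bool)
  (T : (pt W -> R) -> (pt W -> R)) : Prop :=
  (forall f, is_cont lt f -> is_cont lt (T f)) /\
  (forall f g a b, is_cont lt f -> is_cont lt g ->
     T (fun k => a * f k + b * g k) = (fun k => a * T f k + b * T g k)) /\
  (exists C, forall f, is_cont lt f -> sup_norm (T f) <= C * sup_norm f).

Definition Ptilde {W : Type} (lt : W -> W -> bool) (sigma : W) (f : pt W -> R) : pt W -> R :=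
  fun k => if lep lt k (Some sigma) then f k else f None.

Definition supp_in_open {W : Type} (lt : W -> W -> bool) (xi : W) (f : pt W -> R) : Prop :=
  forall k, f k <> 0 -> ltp lt (Some xi) k = true /\ ltp lt k None = true.

(* Main.v *)
Require Import Defs.
From Stdlib Require Import Reals Lra Classical ClassicalEpsilon FunctionalExtensionality Cantor.
From Coquelicot Require Import Coquelicot.
Open Scope R_scope.

Lemma ltp_irr {W} {lt : W -> W -> bool} (HW : is_omega1 W lt) p : ltp lt p p = false.
Proof. destruct p; simpl; auto. apply (om_irrefl _ _ HW). Qed.

Lemma ltp_trans {W} {lt : W -> W -> bool} (HW : is_omega1 W lt) p q r :
  ltp lt p q = true -> ltp lt q r = true -> ltp lt p r = true.
Proof.
  destruct p, q, r; simpl; intros; try discriminate; auto.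
  eapply (om_trans _ _ HW); eauto.
Qed.

Lemma ltp_total {W} {lt : W -> W -> bool} (HW : is_omega1 W lt) p q :
  ltp lt p q = true \/ p = q \/ ltp lt q p = true.
Proof.
  destruct p as [a|], q as [b|]; simpl; auto.
  destruct (om_total _ _ HW a b) as [H|[H|H]]; subst; auto.
Qed.

Lemma ltp_asym {W} {lt : W -> W -> bool} (HW : is_omega1 W lt) p q :
  ltp lt p q = true -> ltp lt q p = false.
Proof.
  intros H. destruct (ltp lt q p) eqn:E; auto.
  pose proof (ltp_trans HW _ _ _ H E). rewrite ltp_irr in H0; auto.
Qed.

Lemma lep_ltp {W} {lt : W -> W -> bool} (HW : is_omega1 W lt) q y :
  lep lt q (Some y) = negb (ltp lt (Some y) q).
Proof.
  destruct q as [a|]; simpl; auto.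
  destruct (om_total _ _ HW a y) as [H|[H|H]].
  - rewrite H. simpl. pose proof (ltp_asym HW (Some a) (Some y) H). simpl in H0. now rewrite H0.
  - subst. now rewrite (om_irrefl _ _ HW).
  - rewrite H. pose proof (ltp_asym HW (Some y) (Some a) H). simpl in H0. now rewrite H0.
Qed.

Lemma ltp_wf {W} {lt : W -> W -> bool} (HW : is_omega1 W lt) :
  well_founded (fun p q => ltp lt p q = true).
Proof.
  assert (HS : forall a, Acc (fun p q => ltp lt p q = true) (Some a)).
  { intro a. induction a as [a IH] using (well_founded_ind (om_wf _ _ HW)).
    constructor. intros [b|] H; simpl in H; try discriminate. auto. }
  intros [a|]; auto. constructor. intros [b|] H; simpl in H; try discriminate. auto.
Qed.

Lemma fchoice {A B : Type} (P : A -> B -> Prop) : (forall x, exists y, P x y) -> exists f : A -> B, forall x, P x (f x).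
Proof.
  intro H. exists (fun x => proj1_sig (constructive_indefinite_description _ (H x))).
  intro x. exact (proj2_sig (constructive_indefinite_description _ (H x))).
Qed.

Lemma bound_gen {W} {lt : W -> W -> bool} (HW : is_omega1 W lt)
  (I : Type) (P : I -> Prop) (F : I -> W) (g : I -> nat)
  (Hg : forall i j, P i -> P j -> g i = g j -> i = j) :
  exists s, forall i, P i -> lt (F i) s = true.
Proof.
  apply NNPP; intro Hn.
  assert (H1: forall s, exists i, P i /\ lt (F i) s = false).
  { intro s; apply NNPP; intro H2; apply Hn; exists s; intros i Pi.
    destruct (lt (F i) s) eqn:E; auto; exfalso; apply H2; eauto. }
  destruct (fchoice _ H1) as [N HN].
  destruct (fchoice _ (om_segments_countable _ _ HW)) as [G HG].
  apply (om_uncountable _ _ HW).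
  exists (fun s => Cantor.to_nat (g (N s), if lt s (F (N s)) then S (G (F (N s)) s) else O)).
  intros x z Hxz. apply Cantor.to_nat_inj in Hxz. injection Hxz as E1 E2.
  destruct (HN x) as [Px Lx]. destruct (HN z) as [Pz Lz].
  pose proof (Hg _ _ Px Pz E1) as E. rewrite <- E in E2, Lz.
  destruct (lt x (F (N x))) eqn:Ex, (lt z (F (N x))) eqn:Ez; try discriminate.
  - injection E2 as E2. eapply HG; eauto.
  - destruct (om_total _ _ HW x (F (N x))) as [H|[H|H]]; try congruence.
    destruct (om_total _ _ HW z (F (N x))) as [H'|[H'|H']]; try congruence.
Qed.

Lemma sup_le {W} (u : pt W -> R) c : (forall k, Rabs (u k) <= c) -> sup_norm u <= c.
Proof.
  intro H. unfold sup_norm.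
  destruct (Lub_Rbar_correct (fun r => exists k, r = Rabs (u k))) as [Hub Hl].
  assert (H1 : Rbar_le (Lub_Rbar (fun r => exists k, r = Rabs (u k))) c).
  { apply Hl. intros x [k ->]. simpl. auto. }
  assert (H2 : Rbar_le (Rabs (u None)) (Lub_Rbar (fun r => exists k, r = Rabs (u k)))).
  { apply Hub. eauto. }
  destruct (Lub_Rbar _); simpl in *; try contradiction; auto.
Qed.

Lemma le_sup {W} (u : pt W -> R) : (exists B, forall k, Rabs (u k) <= B) ->
  forall k, Rabs (u k) <= sup_norm u.
Proof.
  intros [B HB] k. unfold sup_norm.
  destruct (Lub_Rbar_correct (fun r => exists k, r = Rabs (u k))) as [Hub Hl].
  assert (H1 : Rbar_le (Lub_Rbar (fun r => exists k, r = Rabs (u k))) B).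
  { apply Hl. intros x [k' ->]. simpl. auto. }
  assert (H2 : Rbar_le (Rabs (u k)) (Lub_Rbar (fun r => exists k, r = Rabs (u k)))).
  { apply Hub. eauto. }
  destruct (Lub_Rbar _); simpl in *; try contradiction; auto.
Qed.

Lemma exists_above {W} {lt : W -> W -> bool} (HW : is_omega1 W lt) y : exists z, lt y z = true.
Proof.
  apply NNPP; intro Hn. apply (om_uncountable _ _ HW).
  destruct (om_segments_countable _ _ HW y) as [g Hg].
  exists (fun z => if lt z y then S (g z) else O).
  intros a b E.
  assert (Ha : lt y a = false) by (destruct (lt y a) eqn:X; auto; exfalso; eauto).
  assert (Hb : lt y b = false) by (destruct (lt y b) eqn:X; auto; exfalso; eauto).
  destruct (lt a y) eqn:Ea, (lt b y) eqn:Eb; try discriminate.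
  - injection E; eauto.
  - destruct (om_total _ _ HW a y) as [H|[H|H]]; try congruence.
    destruct (om_total _ _ HW b y) as [H'|[H'|H']]; try congruence.
Qed.

Lemma exists_succ {W} {lt : W -> W -> bool} (HW : is_omega1 W lt) y :
  exists z, lt y z = true /\ forall w, lt w z = true -> lt y w = false.
Proof.
  destruct (exists_above HW y) as [z0 Hz0].
  revert Hz0. induction z0 as [z IH] using (well_founded_ind (om_wf _ _ HW)). intro Hz.
  destruct (classic (exists w, lt w z = true /\ lt y w = true)) as [[w [H1 H2]]|Hn].
  - eapply IH; eauto.
  - exists z. split; auto. intros w Hw. destruct (lt y w) eqn:E; auto. exfalso; eauto.
Qed.

Definition maxlo {W} (lt : W -> W -> bool) (a b : option (pt W)) : option (pt W) :=
  match a, b with None, _ => b | _, None => a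
  | Some x, Some y => Some (if ltp lt x y then y else x) end.
Definition minhi {W} (lt : W -> W -> bool) (a b : option (pt W)) : option (pt W) :=
  match a, b with None, _ => b | _, None => a
  | Some x, Some y => Some (if ltp lt x y then x else y) end.

Lemma inter1 {W} {lt : W -> W -> bool} (HW : is_omega1 W lt) lo1 hi1 lo2 hi2 q :
  in_interval lt lo1 hi1 q -> in_interval lt lo2 hi2 q ->
  in_interval lt (maxlo lt lo1 lo2) (minhi lt hi1 hi2) q.
Proof.
  unfold in_interval. intros [A1 B1] [A2 B2]; split.
  - destruct lo1, lo2; simpl; auto. destruct (ltp lt p p0); auto.
  - destruct hi1, hi2; simpl; auto. destruct (ltp lt p p0); auto.
Qed.

Lemma inter2 {W} {lt : W -> W -> bool} (HW : is_omega1 W lt) lo1 hi1 lo2 hi2 q :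
  in_interval lt (maxlo lt lo1 lo2) (minhi lt hi1 hi2) q ->
  in_interval lt lo1 hi1 q /\ in_interval lt lo2 hi2 q.
Proof.
  unfold in_interval. intros [A B].
  assert (L : forall x y, ltp lt (if ltp lt x y then y else x) q = true ->
             ltp lt x q = true /\ ltp lt y q = true).
  { intros x y. destruct (ltp lt x y) eqn:E; intro H.
    - split; auto. eapply ltp_trans; eauto.
    - split; auto. destruct (ltp_total HW x y) as [H'|[H'|H']]; try congruence.
      eapply ltp_trans; eauto. }
  assert (U : forall x y, ltp lt q (if ltp lt x y then x else y) = true ->
             ltp lt q x = true /\ ltp lt q y = true).
  { intros x y. destruct (ltp lt x y) eqn:E; intro H.
    - split; auto. eapply ltp_trans; eauto.
    - split; auto. destruct (ltp_total HW x y) as [H'|[H'|H']]; try congruence.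
      eapply ltp_trans; eauto. }
  destruct lo1 as [x|], lo2 as [y|], hi1 as [u|], hi2 as [v|]; simpl in *;
    repeat match goal with
    | H : ltp lt (if ltp lt ?x ?y then ?y else ?x) q = true |- _ => apply L in H; destruct H
    | H : ltp lt q (if ltp lt ?x ?y then ?x else ?y) = true |- _ => apply U in H; destruct H
    end; tauto.
Qed.

Lemma cont_lin {W} {lt : W -> W -> bool} (HW : is_omega1 W lt) f g a b :
  is_cont lt f -> is_cont lt g -> is_cont lt (fun k => a * f k + b * g k).
Proof.
  intros Hf Hg p eps He.
  set (e' := eps / (Rabs a + Rabs b + 1)).
  assert (He' : 0 < e') by (unfold e'; apply Rdiv_lt_0_compat; auto; pose proof (Rabs_pos a); pose proof (Rabs_pos b); lra).
  destruct (Hf p e' He') as [lo1 [hi1 [I1 H1]]].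
  destruct (Hg p e' He') as [lo2 [hi2 [I2 H2]]].
  exists (maxlo lt lo1 lo2), (minhi lt hi1 hi2). split. apply inter1; auto.
  intros q Iq. apply inter2 in Iq; auto. destruct Iq as [J1 J2].
  specialize (H1 q J1). specialize (H2 q J2).
  replace (a * f q + b * g q - (a * f p + b * g p)) with (a * (f q - f p) + b * (g q - g p)) by ring.
  eapply Rle_lt_trans. apply Rabs_triang. rewrite !Rabs_mult.
  assert (Rabs a * Rabs (f q - f p) <= Rabs a * e') by (apply Rmult_le_compat_l; [apply Rabs_pos|lra]).
  assert (Rabs b * Rabs (g q - g p) <= Rabs b * e') by (apply Rmult_le_compat_l; [apply Rabs_pos|lra]).
  assert (E : (Rabs a + Rabs b) * e' < eps).
  { unfold e'. apply (Rmult_lt_reg_r (Rabs a + Rabs b + 1)). pose proof (Rabs_pos a); pose proof (Rabs_pos b); lra.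
    field_simplify. pose proof (Rabs_pos a); pose proof (Rabs_pos b); nra.
    pose proof (Rabs_pos a); pose proof (Rabs_pos b); lra. }
  lra.
Qed.

Definition loc_const {W} (lt : W -> W -> bool) (b : pt W -> bool) : Prop :=
  forall p, exists lo hi, in_interval lt lo hi p /\ forall q, in_interval lt lo hi q -> b q = b p.

Lemma cont_if {W} {lt : W -> W -> bool} (HW : is_omega1 W lt) b u v :
  loc_const lt b -> is_cont lt u -> is_cont lt v -> is_cont lt (fun q => if b q then u q else v q).
Proof.
  intros Hb Hu Hv p eps He.
  destruct (Hb p) as [lo1 [hi1 [I1 H1]]].
  destruct (b p) eqn:Ep.
  - destruct (Hu p eps He) as [lo2 [hi2 [I2 H2]]].
    exists (maxlo lt lo1 lo2), (minhi lt hi1 hi2). split. apply inter1; auto.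
    intros q Iq. apply inter2 in Iq; auto. destruct Iq as [J1 J2].
    rewrite (H1 q J1). auto.
  - destruct (Hv p eps He) as [lo2 [hi2 [I2 H2]]].
    exists (maxlo lt lo1 lo2), (minhi lt hi1 hi2). split. apply inter1; auto.
    intros q Iq. apply inter2 in Iq; auto. destruct Iq as [J1 J2].
    rewrite (H1 q J1). auto.
Qed.

Lemma cont_const {W} (lt : W -> W -> bool) c : is_cont lt (fun _ : pt W => c).
Proof. intros p eps He. exists None, None. split. split; exact I.
  intros. rewrite Rminus_diag, Rabs_R0. auto. Qed.

Definition beyondb {W} (lt : W -> W -> bool) (r : option W) (q : pt W) : bool :=
  match r with None => true | Some y => ltp lt (Some y) q end.

Lemma beyond_lc {W} {lt : W -> W -> bool} (HW : is_omega1 W lt) r : loc_const lt (beyondb lt r).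
Proof.
  intro p. destruct r as [y|].
  2:{ exists None, None. split. split; exact I. auto. }
  simpl. destruct (ltp lt (Some y) p) eqn:E.
  - exists (Some (Some y)), None. split. split; simpl; auto.
    intros q [A _]. simpl in A. rewrite A. symmetry. exact E.
  - destruct (exists_succ HW y) as [z [Hz1 Hz2]].
    exists None, (Some (Some z)). split. split. exact I.
    + destruct p as [a|]; simpl in *; try discriminate.
      destruct (om_total _ _ HW a y) as [H|[H|H]]; subst; auto. eapply (om_trans _ _ HW); eauto. congruence.
    + intros q [_ B]. destruct q as [c|]; simpl in *; try discriminate. rewrite (Hz2 c B). symmetry. exact E.
Qed.

Lemma cont_bounded {W} {lt : W -> W -> bool} (HW : is_omega1 W lt) f :
  is_cont lt f -> exists B, forall k, Rabs (f k) <= B.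
Proof.
  intro Hf.
  assert (C : forall p, exists B, forall q, ltp lt p q = false -> Rabs (f q) <= B).
  { intro p. induction p as [p IH] using (well_founded_ind (ltp_wf HW)).
    destruct (Hf p 1 Rlt_0_1) as [lo [hi [[Ilo Ihi] H]]].
    assert (Hq : forall q, ltp lt p q = false -> match hi with None => True | Some b => ltp lt q b = true end).
    { intros q Hq. destruct hi as [b|]; auto.
      destruct (ltp_total HW p q) as [X|[X|X]]; try congruence. eapply ltp_trans; eauto. }
    destruct lo as [a|].
    - destruct (IH a Ilo) as [Ba HBa]. exists (Rabs Ba + Rabs (f p) + 1). intros q Hpq.
      destruct (ltp lt a q) eqn:Eaq.
      + assert (Rabs (f q - f p) < 1) by (apply H; split; auto; apply Hq; auto).
        pose proof (Rabs_triang_inv (f q) (f p)). pose proof (Rabs_pos Ba). lra.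
      + specialize (HBa q Eaq). pose proof (Rle_abs Ba). pose proof (Rabs_pos (f p)). lra.
    - exists (Rabs (f p) + 1). intros q Hpq.
      assert (Rabs (f q - f p) < 1) by (apply H; split; [exact I|apply Hq; auto]).
      pose proof (Rabs_triang_inv (f q) (f p)). lra. }
  destruct (C None) as [B HB]. exists B. intro k. apply HB. reflexivity.
Qed.

Lemma zero_seq x c : 0 < c -> (forall n, Rabs x < c / (INR n + 1)) -> x = 0.
Proof.
  intros Hc H. destruct (Req_dec x 0) as [|Hx]; auto. exfalso.
  assert (Ha : 0 < Rabs x) by (apply Rabs_pos_lt; auto).
  destruct (archimed_cor1 (Rabs x / c)) as [N [H1 H2]]. apply Rdiv_lt_0_compat; auto.
  specialize (H N). apply lt_INR in H2. simpl in H2.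
  assert (c / (INR N + 1) < c / INR N).
  { apply Rmult_lt_compat_l; auto. apply Rinv_lt_contravar; nra. }
  assert (c / INR N < Rabs x).
  { apply (Rmult_lt_reg_r (/ c)). apply Rinv_0_lt_compat; auto.
    replace (c / INR N * / c) with (/ INR N) by (field; lra). exact H1. }
  lra.
Qed.

Lemma zero_eps x K : 0 <= K -> (forall eps, 0 < eps -> Rabs x <= K * eps) -> x = 0.
Proof.
  intros HK H. destruct (Req_dec x 0) as [|Hx]; auto. exfalso.
  assert (Ha : 0 < Rabs x) by (apply Rabs_pos_lt; auto).
  specialize (H (Rabs x / (K + 1))). 
  assert (0 < Rabs x / (K+1)) by (apply Rdiv_lt_0_compat; lra).
  specialize (H H0).
  assert (K * (Rabs x / (K + 1)) < Rabs x).
  { apply (Rmult_lt_reg_r (K+1)). lra. field_simplify; nra. }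
  lra.
Qed.

Definition ECst {W} (lt : W -> W -> bool) (s : W) (u : pt W -> R) : Prop :=
  forall q, ltp lt (Some s) q = true -> u q = u None.

Lemma ECst_mono {W} {lt : W -> W -> bool} (HW : is_omega1 W lt) s s' u :
  ECst lt s u -> lt s s' = true -> ECst lt s' u.
Proof. intros H Hs q Hq. apply H. eapply ltp_trans; eauto. exact Hs. Qed.

Lemma W_inh {W} {lt : W -> W -> bool} (HW : is_omega1 W lt) : inhabited W.
Proof.
  apply NNPP; intro Hn. apply (om_uncountable _ _ HW). exists (fun _ => O).
  intros x. exfalso. apply Hn. exact (inhabits x).
Qed.

Lemma ev_const {W} {lt : W -> W -> bool} (HW : is_omega1 W lt) u :
  is_cont lt u -> exists s, ECst lt s u.
Proof.
  intro Hu. destruct (W_inh HW) as [w0].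
  assert (H : forall n : nat, exists y, forall q, ltp lt (Some y) q = true ->
            Rabs (u q - u None) < 1 / (INR n + 1)).
  { intro n. assert (Hp : 0 < 1 / (INR n + 1)).
    { apply Rdiv_lt_0_compat. lra. pose proof (pos_INR n). lra. }
    destruct (Hu None _ Hp) as [lo [hi [[Ilo Ihi] Hl]]].
    assert (Hhi : hi = None) by (destruct hi as [b|]; auto; destruct b; simpl in Ihi; discriminate).
    subst hi.
    destruct lo as [[a|]|].
    - exists a. intros q Hq. apply Hl. split; [exact Hq | exact I].
    - simpl in Ilo. discriminate.
    - exists w0. intros q Hq. apply Hl. split; exact I. }
  destruct (fchoice _ H) as [Y HY].
  destruct (bound_gen HW nat (fun _ => True) Y (fun n => n)) as [s Hs]; auto.
  exists s. intros q Hq. apply Rminus_diag_uniq. apply (zero_seq _ 1). lra.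
  intro n. apply HY. eapply ltp_trans; eauto. apply Hs. exact I.
Qed.

Definition Pt' {W} (lt : W -> W -> bool) (r : option W) (h : pt W -> R) : pt W -> R :=
  fun q => if beyondb lt r q then h None else h q.
Definition indf {W} (lt : W -> W -> bool) (r : option W) (p : W) : pt W -> R :=
  fun q => if beyondb lt (Some p) q then 0 else (if beyondb lt r q then 1 else 0).

Definition Aprop {W} (lt : W -> W -> bool) (T : (pt W -> R) -> (pt W -> R)) (r : option W) : Prop :=
  exists s, forall h, is_cont lt h -> (forall q, beyondb lt r q = true -> h q = h None) -> ECst lt s (T h).

Lemma cont_Pt' {W} {lt : W -> W -> bool} (HW : is_omega1 W lt) r h : is_cont lt h -> is_cont lt (Pt' lt r h).
Proof. intro. apply cont_if; auto. apply beyond_lc; auto. apply cont_const. Qed.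

Lemma cont_ind {W} {lt : W -> W -> bool} (HW : is_omega1 W lt) r p : is_cont lt (indf lt r p).
Proof. apply cont_if. auto. apply beyond_lc; auto. apply cont_const.
  apply cont_if; auto. apply beyond_lc; auto. apply cont_const. apply cont_const. Qed.

Lemma approx {W} {lt : W -> W -> bool} (HW : is_omega1 W lt)
  (T : (pt W -> R) -> (pt W -> R))
  (Tc : forall f, is_cont lt f -> is_cont lt (T f))
  (Tlin : forall f g a b, is_cont lt f -> is_cont lt g ->
     T (fun k => a * f k + b * g k) = (fun k => a * T f k + b * T g k))
  (C : R) (HC : forall f, is_cont lt f -> sup_norm (T f) <= C * sup_norm f)
  h q : is_cont lt h ->
  (forall eps, 0 < eps -> exists g, is_cont lt g /\ (forall k, Rabs (h k - g k) <= eps) /\ T g q = T g None) ->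
  T h q = T h None.
Proof.
  intros Hh H. apply Rminus_diag_uniq. apply (zero_eps _ (2 * Rabs C)).
  pose proof (Rabs_pos C); lra.
  intros eps He. destruct (H eps He) as [g [Hg [Hd HT]]].
  set (D := fun k => 1 * h k + (-1) * g k).
  assert (HD : is_cont lt D) by (apply cont_lin; auto).
  assert (TD : T D = fun k => 1 * T h k + (-1) * T g k) by (apply Tlin; auto).
  assert (S1 : sup_norm D <= eps).
  { apply sup_le. intro k. unfold D. replace (1 * h k + -1 * g k) with (h k - g k) by ring. auto. }
  assert (S0 : 0 <= sup_norm D).
  { eapply Rle_trans. apply Rabs_pos. apply (le_sup D (cont_bounded HW _ HD) None). }
  assert (S2 : sup_norm (T D) <= Rabs C * eps).
  { eapply Rle_trans. apply HC; auto.
    apply Rle_trans with (Rabs C * sup_norm D). apply Rmult_le_compat_r; auto. apply Rle_abs.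
    apply Rmult_le_compat_l; auto. apply Rabs_pos. }
  pose proof (le_sup (T D) (cont_bounded HW _ (Tc _ HD)) q) as B1.
  pose proof (le_sup (T D) (cont_bounded HW _ (Tc _ HD)) None) as B2.
  rewrite TD in B1, B2, S2.
  replace (T h q - T h None) with ((1 * T h q + -1 * T g q) - (1 * T h None + -1 * T g None)) by (rewrite HT; ring).
  unfold Rminus at 1. eapply Rle_trans. apply Rabs_triang. rewrite Rabs_Ropp. lra.
Qed.

Lemma A_None {W} {lt : W -> W -> bool} (HW : is_omega1 W lt)
  (T : (pt W -> R) -> (pt W -> R))
  (Tc : forall f, is_cont lt f -> is_cont lt (T f))
  (Tlin : forall f g a b, is_cont lt f -> is_cont lt g ->
     T (fun k => a * f k + b * g k) = (fun k => a * T f k + b * T g k)) :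
  Aprop lt T None.
Proof.
  destruct (ev_const HW (T (fun _ => 1))) as [s Hs]. apply Tc, cont_const.
  exists s. intros h Hh Hc.
  assert (E : h = fun k => h None * (fun _ => 1) k + 0 * (fun _ => 1) k).
  { apply functional_extensionality. intro k. rewrite (Hc k eq_refl). ring. }
  rewrite E, Tlin by apply cont_const. intros q Hq. rewrite (Hs q Hq). reflexivity.
Qed.

Lemma A_all {W} {lt : W -> W -> bool} (HW : is_omega1 W lt)
  (T : (pt W -> R) -> (pt W -> R))
  (Tc : forall f, is_cont lt f -> is_cont lt (T f))
  (Tlin : forall f g a b, is_cont lt f -> is_cont lt g ->
     T (fun k => a * f k + b * g k) = (fun k => a * T f k + b * T g k))
  (C : R) (HC : forall f, is_cont lt f -> sup_norm (T f) <= C * sup_norm f) :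
  forall p, Aprop lt T (Some p).
Proof.
  intro p. induction p as [p IH] using (well_founded_ind (om_wf _ _ HW)).
  set (okr := fun r : option W => match r with None => True | Some y => lt y p = true end).
  assert (HA : forall r, exists s, okr r -> forall h, is_cont lt h ->
      (forall q, beyondb lt r q = true -> h q = h None) -> ECst lt s (T h)).
  { intro r. destruct r as [y|].
    - destruct (classic (lt y p = true)) as [Hy|Hy].
      + destruct (IH y Hy) as [s Hs]. exists s. intros _. exact Hs.
      + destruct (W_inh HW) as [w0]. exists w0. intro X. contradiction.
    - destruct (A_None HW T Tc Tlin) as [s Hs]. exists s. intros _. exact Hs. }
  destruct (fchoice _ HA) as [Sg HSg].
  assert (HE : forall r, exists s, ECst lt s (T (indf lt r p))).
  { intro r. apply ev_const; auto. apply Tc, cont_ind; auto. }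
  destruct (fchoice _ HE) as [Eg HEg].
  destruct (om_segments_countable _ _ HW p) as [gp Hgp].
  destruct (bound_gen HW (bool * option W) (fun i => okr (snd i))
     (fun i => if fst i then Sg (snd i) else Eg (snd i))
     (fun i => Cantor.to_nat (if fst i then 1%nat else 0%nat,
                 match snd i with None => 0%nat | Some y => S (gp y) end))) as [s Hs].
  { intros [b1 r1] [b2 r2] H1 H2 E. apply Cantor.to_nat_inj in E. simpl in *.
    injection E as E1 E2. f_equal.
    - destruct b1, b2; simpl in E1; congruence.
    - destruct r1 as [y1|], r2 as [y2|]; simpl in *; try discriminate; auto.
      injection E2 as E2. f_equal. eapply Hgp; eauto. }
  exists s. intros h Hh Hbey q Hq.
  apply (approx HW T Tc Tlin C HC); auto.
  intros eps He.
  destruct (Hh (Some p) eps He) as [lo [hi [[Ilo Ihi] Hl]]].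
  set (r := match lo with Some (Some a) => Some a | _ => None end).
  assert (Hr : okr r).
  { unfold r. destruct lo as [[a|]|]; simpl in *; auto. }
  assert (Hbr : forall k, beyondb lt (Some p) k = true -> beyondb lt r k = true).
  { intros k Hk. unfold r. destruct lo as [[a|]|]; simpl in *; auto.
    exact (ltp_trans HW (Some a) (Some p) k Ilo Hk). }
  exists (fun k => 1 * Pt' lt r h k + (h (Some p) - h None) * indf lt r p k).
  split; [|split].
  - apply cont_lin; auto. apply cont_Pt'; auto. apply cont_ind; auto.
  - intro k. unfold Pt', indf. destruct (beyondb lt (Some p) k) eqn:Ek.
    + rewrite (Hbr k Ek). rewrite (Hbey k Ek). replace (h None - (1 * h None + (h (Some p) - h None) * 0)) with 0 by ring.
      rewrite Rabs_R0. lra.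
    + destruct (beyondb lt r k) eqn:Erk.
      * replace (h k - (1 * h None + (h (Some p) - h None) * 1)) with (h k - h (Some p)) by ring.
        apply Rlt_le. apply Hl. split.
        -- unfold r in Erk. destruct lo as [[a|]|]; simpl in *; auto; discriminate.
        -- destruct hi as [b|]; [|exact I].
           simpl in Ek. destruct (ltp_total HW k (Some p)) as [X|[X|X]].
           ++ eapply ltp_trans; eauto.
           ++ subst; auto.
           ++ simpl in X. congruence.
      * replace (h k - (1 * h k + (h (Some p) - h None) * 0)) with 0 by ring. rewrite Rabs_R0. lra.
  - rewrite Tlin by first [apply cont_Pt'; auto | apply cont_ind; auto].
    assert (E1 : ECst lt s (T (Pt' lt r h))).
    { eapply ECst_mono; auto. apply (HSg r Hr). apply cont_Pt'; auto.
      intros q0 Hq0. unfold Pt'. rewrite Hq0. destruct (beyondb lt r None); auto.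
      apply (Hs (true, r) Hr). }
    assert (E2 : ECst lt s (T (indf lt r p))).
    { apply (ECst_mono HW (Eg r)). apply HEg. apply (Hs (false, r) Hr). }
    rewrite (E1 q Hq), (E2 q Hq). reflexivity.
Qed.

Lemma Ptilde_Pt' {W} {lt : W -> W -> bool} (HW : is_omega1 W lt) s f :
  Ptilde lt s f = Pt' lt (Some s) f.
Proof.
  apply functional_extensionality. intro k. unfold Ptilde, Pt'. simpl beyondb.
  rewrite (lep_ltp HW). change (ltp lt (Some s) k) with (match k with Some b => lt s b | None => true end). destruct k; [destruct (lt s w)|]; reflexivity.
Qed.

Theorem lemma4p3 (W : Type) (lt : W -> W -> bool) (HW : is_omega1 W lt)
  (T : (pt W -> R) -> (pt W -> R)) (HT : bounded_operator lt T)
  (Hne : forall sigma : W, exists f, is_cont lt f /\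
           T f <> Ptilde lt sigma (T (Ptilde lt sigma f))) :
  exists eps, 0 < eps /\
    forall xi : W, exists f, is_cont lt f /\ supp_in_open lt xi f /\
      sup_norm f <= 1 /\ sup_norm (T f) >= eps.
Proof.
  destruct HT as [Tc [Tlin [C HC]]].
  apply NNPP; intro Hn.
  assert (H1 : forall n : nat, exists xi, forall f, is_cont lt f -> supp_in_open lt xi f ->
            sup_norm f <= 1 -> sup_norm (T f) < 1 / (INR n + 1)).
  { intro n. apply NNPP; intro H2. apply Hn. exists (1 / (INR n + 1)). split.
    { apply Rdiv_lt_0_compat. lra. pose proof (pos_INR n). lra. }
    intro xi. apply NNPP; intro H3. apply H2. exists xi. intros f Hf Hs Hn1.
    destruct (Rlt_le_dec (sup_norm (T f)) (1 / (INR n + 1))) as [X|X]; auto.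
    exfalso; apply H3; exists f; split; [exact Hf|split; [exact Hs|split; [exact Hn1|lra]]]. }
  destruct (fchoice _ H1) as [Xi HXi].
  destruct (bound_gen HW nat (fun _ => True) Xi (fun n => n)) as [xi Hxi]; auto.
  assert (Kill : forall f, is_cont lt f -> supp_in_open lt xi f -> forall k, T f k = 0).
  { intros f Hf Hs k. destruct (cont_bounded HW f Hf) as [B HB].
    set (M := Rabs B + 1).
    assert (HM : 0 < M) by (unfold M; pose proof (Rabs_pos B); lra).
    set (f' := fun k => (1 / M) * f k + 0 * f k).
    assert (Hf' : is_cont lt f') by (apply cont_lin; auto).
    assert (Tf' : T f' = fun k => (1 / M) * T f k + 0 * T f k) by (apply Tlin; auto).
    apply (zero_seq _ M HM). intro n.
    assert (Hs' : supp_in_open lt (Xi n) f').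
    { intros j Hj. assert (f j <> 0) by (intro E; apply Hj; unfold f'; rewrite E; ring).
      destruct (Hs j H) as [X Y]. split; auto.
      exact (ltp_trans HW (Some (Xi n)) (Some xi) j (Hxi n I) X). }
    assert (Hn' : sup_norm f' <= 1).
    { apply sup_le. intro j. unfold f'. replace (1 / M * f j + 0 * f j) with (f j / M) by (field; lra).
      unfold Rdiv. rewrite Rabs_mult, Rabs_inv, (Rabs_pos_eq M) by lra.
      apply (Rmult_le_reg_r M); auto. rewrite Rmult_assoc, Rinv_l by lra.
      specialize (HB j). pose proof (Rle_abs B). unfold M. lra. }
    pose proof (HXi n f' Hf' Hs' Hn') as X.
    pose proof (le_sup (T f') (cont_bounded HW _ (Tc _ Hf')) k) as Y.
    rewrite Tf' in X, Y.
    replace (1 / M * T f k + 0 * T f k) with (T f k / M) in Y by (field; lra).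
    unfold Rdiv in Y. rewrite Rabs_mult, Rabs_inv, (Rabs_pos_eq M) in Y by lra.
    assert (Z : Rabs (T f k) * / M < 1 / (INR n + 1)) by lra.
    apply (Rmult_lt_compat_r M) in Z; auto.
    rewrite Rmult_assoc, Rinv_l, Rmult_1_r in Z by lra.
    replace (M / (INR n + 1)) with (1 / (INR n + 1) * M) by (field; pose proof (pos_INR n); lra).
    exact Z. }
  assert (Step : forall s, lt s xi = false -> forall f, is_cont lt f -> T f = T (Ptilde lt s f)).
  { intros s Hs f Hf.
    assert (HP : is_cont lt (Ptilde lt s f)) by (rewrite Ptilde_Pt' by auto; apply cont_Pt'; auto).
    set (g := fun k => 1 * f k + (-1) * Ptilde lt s f k).
    assert (Hg : is_cont lt g) by (apply cont_lin; auto).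
    assert (Tg : T g = fun k => 1 * T f k + (-1) * T (Ptilde lt s f) k) by (apply Tlin; auto).
    assert (Sg : supp_in_open lt xi g).
    { intros j Hj. unfold g, Ptilde in Hj. rewrite (lep_ltp HW) in Hj.
      destruct (ltp lt (Some s) j) eqn:E; simpl in Hj.
      - destruct j as [a|]; [|exfalso; apply Hj; ring]. split; [|reflexivity].
        simpl in E |- *. destruct (om_total _ _ HW xi s) as [X|[X|X]]; try congruence.
        eapply (om_trans _ _ HW); eauto.
      - exfalso; apply Hj; ring. }
    apply functional_extensionality. intro k.
    pose proof (Kill g Hg Sg k) as K. rewrite Tg in K. lra. }
  destruct (A_all HW T Tc Tlin C HC xi) as [s1 Hs1].
  assert (Hsig : exists sg, lt sg xi = false /\ forall u, ECst lt s1 u -> ECst lt sg u).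
  { destruct (lt xi s1) eqn:E.
    - exists s1. split; auto. pose proof (ltp_asym HW (Some xi) (Some s1) E). exact H.
    - exists xi. split. apply (om_irrefl _ _ HW). intros u Hu.
      destruct (om_total _ _ HW s1 xi) as [X|[X|X]]; try congruence.
      + apply (ECst_mono HW s1); auto.
      + subst; auto. }
  destruct Hsig as [sg [Hsg1 Hsg2]].
  destruct (Hne sg) as [f [Hf Hneq]]. apply Hneq.
  rewrite <- (Step sg Hsg1 f Hf).
  assert (EC1 : ECst lt sg (T f)).
  { rewrite (Step xi (om_irrefl _ _ HW xi) f Hf). apply Hsg2. apply Hs1.
    rewrite Ptilde_Pt' by auto. apply cont_Pt'; auto.
    intros q Hq. unfold Ptilde. rewrite (lep_ltp HW). simpl in Hq |- *. rewrite Hq. reflexivity. }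
  apply functional_extensionality. intro k. unfold Ptilde. rewrite (lep_ltp HW).
  destruct (ltp lt (Some sg) k) eqn:E; simpl; auto.
Qed.
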